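(* Let $G$ be the cube graph $Q_3$. Then $T_3(G)=6$.
   Context: Fix a set $\Sigma$ of symbols (bond-edge types) and a disjoint copy $\hat\Sigma=\{\hat a:a\in\Sigma\}$ with $\hat{\hat a}=a$; elements of $\Sigma\cup\hat\Sigma$ are cohesive-end types. A tile is a finite multiset of cohesive-end types. A pot is a finite set $P$ of tiles such that whenever $x$ occurs in a tile of $P$, $\hat x$ occurs in some tile of $P$; $\#P$ is its number of tiles. Graphs are finite, loops and multiple edges allowed. An assembly design of a graph $H$ labels the half-edges of $H$ by cohesive-end types so that the two half-edges of each edge receive complementary labels $x,\hat x$; $t_v$ is the multiset of labels at $v$, $P_\lambda(H)=\{t_v\}$, and $P$ realizes $H$ ($H\in\mathcal{O}(P)$) if some assembly design $\lambda$ has $P_\lambda(H)\subseteq P$. $P$ realizes $G$ according to Scenario 3 if $G\in\mathcal{O}(P)$, every $H\in\mathcal{O}(P)$ has $\#V(H)\ge\#V(G)$, and every $H\in\mathcal{O}(P)$ with $\#V(H)=\#V(G)$ is isomorphic to $G$. $T_3(G)=\min\{\#P: P \text{ realizes } G \text{ according to Scenario 3}\}$. *)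

(* Defs.v *)
From mathcomp Require Import all_boot.
From mathcomp Require Import finmap multiset.

Set Implicit Arguments.
Unset Strict Implicit.
Unset Printing Implicit Defensive.

Local Open Scope fset_scope.

(* Bond-edge types Sigma := nat (an unbounded supply of symbols).
   A cohesive-end type is (a, false) = a  or  (a, true) = hat a. *)
Definition cet : Type := (nat * bool)%type.
Definition hat (x : cet) : cet := (x.1, ~~ x.2).

Definition tile : Type := {mset cet}%mset.

Definition is_pot (P : {fset tile}) : Prop :=
  forall (t : tile) (x : cet), t \in P -> 0 < t x ->
    exists2 t' : tile, t' \in P & 0 < t' (hat x).

(* Finite multigraphs with loops and multiple edges: vertices 'I_nv,
   edge number i of the list joins (edges`_i).1 and (edges`_i).2. *)
Record mgraph := MGraph { nv : nat; edges : seq ('I_nv * 'I_nv) }.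

Definition mult (H : mgraph) (u v : 'I_(nv H)) : nat :=
  count (fun e => (e == (u, v)) || (e == (v, u))) (edges H).
Arguments mult : clear implicits.

Definition mg_iso (G H : mgraph) : Prop :=
  exists f : 'I_(nv G) -> 'I_(nv H),
    bijective f /\ forall u v, mult G u v = mult H (f u) (f v).

(* An assembly design assigns to edge i the label lam i on its first
   half-edge and hat (lam i) on its second half-edge (every labelling with
   complementary labels on each edge has this form).  The tile at v is the
   multiset of labels of the half-edges at v (a loop contributes both). *)
Definition tile_at (H : mgraph) (lam : nat -> cet) (v : 'I_(nv H)) : tile :=
  seq_mset (flatten [seq (if (nth (v, v) (edges H) i).1 == v then [:: lam i] else [::]) ++
                         (if (nth (v, v) (edges H) i).2 == v then [:: hat (lam i)] else [::])
                    | i <- iota 0 (size (edges H))]).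

Definition realizes (P : {fset tile}) (H : mgraph) : Prop :=
  exists lam : nat -> cet, forall v : 'I_(nv H), tile_at lam v \in P.

Definition in_O (P : {fset tile}) (H : mgraph) : Prop :=
  0 < nv H /\ realizes P H.

Definition scenario3 (P : {fset tile}) (G : mgraph) : Prop :=
  [/\ is_pot P, in_O P G,
      (forall H, in_O P H -> nv G <= nv H)
    & (forall H, in_O P H -> nv H = nv G -> mg_iso H G)].

Definition T3_eq (G : mgraph) (n : nat) : Prop :=
  (exists P, scenario3 P G /\ #|` P| = n) /\
  (forall P, scenario3 P G -> n <= #|` P|).

(* The cube graph Q_3: vertices 0..7, edges between labels differing in one bit. *)
Definition Q3_edges_nat : seq (nat * nat) :=
  [:: (0,1); (0,2); (0,4); (1,3); (1,5); (2,3); (2,6); (3,7);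
      (4,5); (4,6); (5,7); (6,7)].

Definition Q3 : mgraph :=
  @MGraph 8 [seq ((inord p.1 : 'I_8), (inord p.2 : 'I_8)) | p <- Q3_edges_nat].

(* Main.v *)
Require Import Defs.
From mathcomp Require Import all_boot zify.
From mathcomp Require Import finmap multiset.
Set Implicit Arguments. Unset Strict Implicit. Unset Printing Implicit Defensive.

Lemma hatK (x : cet) : hat (hat x) = x.
Proof. by case: x => a b; rewrite /hat /= negbK. Qed.

Lemma hat_eq (x y : cet) : (hat x == y) = (x == hat y).
Proof. by case: x y => a b [c d]; rewrite /hat /= !xpair_eqE; case: b; case: d. Qed.

Lemma hat_neq (x : cet) : (hat x == x) = false.
Proof. by case: x => a b; rewrite /hat /= xpair_eqE; case: b; rewrite andbF. Qed.

Definition hl (H : mgraph) (lam : nat -> cet) (v : 'I_(nv H)) : seq cet :=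
  flatten [seq (if (nth (v, v) (edges H) i).1 == v then [:: lam i] else [::]) ++
               (if (nth (v, v) (edges H) i).2 == v then [:: hat (lam i)] else [::])
          | i <- iota 0 (size (edges H))].

Lemma tile_atE H lam v : @tile_at H lam v = seq_mset (hl lam v).
Proof. by []. Qed.

Lemma tile_at_count H lam v y : (@tile_at H lam v) y = count_mem y (hl lam v).
Proof. by rewrite tile_atE mset_seqE. Qed.

Lemma count_hl H lam (v : 'I_(nv H)) (P : pred cet) :
  count P (hl lam v) = \sum_(i <- iota 0 (size (edges H)))
     (((nth (v, v) (edges H) i).1 == v) && P (lam i) +
      ((nth (v, v) (edges H) i).2 == v) && P (hat (lam i))).
Proof.
rewrite /hl count_flatten sumn_map big_map; apply: eq_bigr => i _.
rewrite count_cat; case: ifP => _; case: ifP => _ /=; by rewrite ?addn0.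
Qed.

Lemma size_hl H lam (v : 'I_(nv H)) :
  size (hl lam v) = \sum_(i <- iota 0 (size (edges H)))
     (((nth (v, v) (edges H) i).1 == v) + ((nth (v, v) (edges H) i).2 == v)).
Proof.
rewrite -count_predT count_hl; apply: eq_bigr => i _; by rewrite !andbT.
Qed.

Lemma sum_eqv n (x : 'I_n) : \sum_(v < n) ((x == v) : nat) = 1.
Proof.
rewrite (bigD1 x) //= eqxx big1 // => v; rewrite eq_sym => /negbTE -> //.
Qed.

Lemma balance_gen H lam (P : pred cet) :
  \sum_(v < nv H) count P (hl lam v) =
  \sum_(i <- iota 0 (size (edges H))) (P (lam i) + P (hat (lam i))).
Proof.
case: H lam P => n es lam P /=.
under eq_bigr => v _ do rewrite count_hl /=.
rewrite exchange_big /= big_seq [RHS]big_seq; apply: eq_bigr => i.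
rewrite mem_iota add0n => /andP [_ Hi].
case: es Hi => [//|e0 es] Hi.
under eq_bigr => v _ do rewrite !(set_nth_default e0 (v, v) Hi).
rewrite big_split /=.
congr (_ + _).
  under eq_bigr => v _ do rewrite -mulnb.
  by rewrite -big_distrl /= sum_eqv mul1n.
under eq_bigr => v _ do rewrite -mulnb.
by rewrite -big_distrl /= sum_eqv mul1n.
Qed.

Lemma balance H lam (y : cet) :
  \sum_(v < nv H) (@tile_at H lam v) y = \sum_(v < nv H) (@tile_at H lam v) (hat y).
Proof.
under eq_bigr => v _ do rewrite tile_at_count.
under [RHS]eq_bigr => v _ do rewrite tile_at_count.
rewrite !balance_gen; apply: eq_bigr => i _.
rewrite /= addnC; congr (_ + _); congr (nat_of_bool _).
  by rewrite /= hat_eq.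
by rewrite /= hat_eq hatK.
Qed.

Lemma count_as_sum T (P : pred T) s : count P s = \sum_(x <- s) P x.
Proof. by rewrite -sum1_count big_mkcond. Qed.

Lemma deg_bound H lam (u : 'I_(nv H)) :
  \sum_(w < nv H) mult H u w <= size (hl lam u).
Proof.
rewrite size_hl.
have -> : \sum_(w < nv H) mult H u w =
   \sum_(w < nv H) \sum_(e <- edges H) ((e == (u, w)) || (e == (w, u))).
  by apply: eq_bigr => w _; exact: count_as_sum.
rewrite exchange_big /= (big_nth (u, u)) /=.
rewrite /index_iota subn0.
apply: leq_sum => i _.
set e := nth (u, u) (edges H) i.
apply: (@leq_trans (\sum_(w < nv H) (((e.1 == u) && (e.2 == w)) + ((e.2 == u) && (e.1 == w))))).
  apply: leq_sum => w _; case: e => a b /=; rewrite !xpair_eqE.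
  by case: (a == u); case: (b == w); case: (b == u); case: (a == w).
rewrite big_split /= leq_eqVlt; apply/orP; left; apply/eqP.
congr (_ + _); under eq_bigr => w _ do rewrite -mulnb;
  by rewrite -big_distrr /= sum_eqv muln1.
Qed.

Lemma mult_sym H u v : mult H u v = mult H v u.
Proof. by apply: eq_count => e; rewrite orbC. Qed.


Lemma hl_mem H lam (u : 'I_(nv H)) y : y \in hl lam u ->
  exists2 i, i < size (edges H) &
    (((nth (u, u) (edges H) i).1 == u) && (lam i == y)) ||
    (((nth (u, u) (edges H) i).2 == u) && (hat (lam i) == y)).
Proof.
case/flattenP => l /mapP [i]; rewrite mem_iota add0n => /andP [_ Hi] -> Hy.
exists i => //; move: Hy; rewrite mem_cat.
by case: ifP => H1; case: ifP => H2; rewrite ?inE ?(eq_sym y) //=;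
  try case/orP; move=> ->; rewrite ?orbT.
Qed.

Lemma hl_in1 H lam (u : 'I_(nv H)) i x0 : i < size (edges H) ->
  (nth x0 (edges H) i).1 = u -> lam i \in hl lam u.
Proof.
move=> Hi E; apply/flattenP; exists
  ((if (nth (u, u) (edges H) i).1 == u then [:: lam i] else [::]) ++
   (if (nth (u, u) (edges H) i).2 == u then [:: hat (lam i)] else [::])).
  by apply/mapP; exists i => //; rewrite mem_iota add0n.
by rewrite (set_nth_default x0 (u, u) Hi) E eqxx mem_cat inE eqxx.
Qed.

Lemma hl_in2 H lam (u : 'I_(nv H)) i x0 : i < size (edges H) ->
  (nth x0 (edges H) i).2 = u -> hat (lam i) \in hl lam u.
Proof.
move=> Hi E; apply/flattenP; exists
  ((if (nth (u, u) (edges H) i).1 == u then [:: lam i] else [::]) ++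
   (if (nth (u, u) (edges H) i).2 == u then [:: hat (lam i)] else [::])).
  by apply/mapP; exists i => //; rewrite mem_iota add0n.
by rewrite (set_nth_default x0 (u, u) Hi) E eqxx mem_cat inE eqxx orbT.
Qed.

Lemma mult_pos H u w i x0 : i < size (edges H) ->
  (nth x0 (edges H) i = (u, w) \/ nth x0 (edges H) i = (w, u)) -> 0 < mult H u w.
Proof.
move=> Hi E; rewrite /mult -has_count; apply/hasP.
exists (nth x0 (edges H) i); first exact: mem_nth.
by case: E => ->; rewrite eqxx ?orbT.
Qed.

Lemma exists_nbr H lam (u : 'I_(nv H)) y : y \in hl lam u ->
  exists w, hat y \in hl lam w /\ 0 < mult H u w.
Proof.
case/hl_mem => i Hi /orP [/andP [/eqP E1 /eqP E2] | /andP [/eqP E1 /eqP E2]].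
- exists (nth (u, u) (edges H) i).2; split.
    by rewrite -E2; apply: (@hl_in2 _ _ _ _ (u, u)) => //.
  apply: (@mult_pos _ _ _ _ (u, u) Hi); left; move: E1; by case: (nth (u, u) (edges H) i) => a b /= ->.
- exists (nth (u, u) (edges H) i).1; split.
    by rewrite -E2 hatK; apply: (@hl_in1 _ _ _ _ (u, u)) => //.
  apply: (@mult_pos _ _ _ _ (u, u) Hi); right; move: E1; by case: (nth (u, u) (edges H) i) => a b /= ->.
Qed.

Definition multN (es : seq (nat * nat)) (u v : nat) : nat :=
  count (fun e => (e == (u, v)) || (e == (v, u))) es.

Fixpoint allbits (n : nat) : seq (seq bool) :=
  if n is n'.+1 then [seq b :: l | b <- [:: false; true], l <- allbits n'] else [:: [::]].

Definition goodN (es : seq (nat * nat)) : bool :=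
  all (fun u => all (fun v => multN es u v <= (u != v)) (iota 0 8)) (iota 0 8) &&
  has (fun l => all (fun e => nth false l e.1 != nth false l e.2) es) (allbits 8).

Definition nearn (i : nat) (s : bool) : nat :=
  if s then (nth (0,0) Q3_edges_nat i).2 else (nth (0,0) Q3_edges_nat i).1.

Definition swE (i : nat) (s : bool) (j : nat) (s' : bool) (k : nat) : nat * nat :=
  if k == i then (nearn i s, nearn j (~~ s'))
  else if k == j then (nearn j s', nearn i (~~ s))
  else nth (0,0) Q3_edges_nat k.

Definition swN i s j s' := [seq swE i s j s' k | k <- iota 0 12].

Definition GRtab : seq (nat * bool * nat * bool) := [:: (0,false,1,false); (0,false,2,false); (0,false,3,true); (0,false,4,true); (0,false,11,false); (0,true,1,true); (0,true,2,true); (0,true,3,false); (0,true,4,false); (0,true,11,true); (1,false,0,false); (1,false,2,false); (1,false,5,true); (1,false,6,true); (1,false,10,false); (1,true,0,true); (1,true,2,true); (1,true,5,false); (1,true,6,false); (1,true,10,true); (2,false,0,false); (2,false,1,false); (2,false,7,false); (2,false,8,true); (2,false,9,true); (2,true,0,true); (2,true,1,true); (2,true,7,true); (2,true,8,false); (2,true,9,false); (3,false,0,true); (3,false,4,false); (3,false,5,false); (3,false,7,true); (3,false,9,false); (3,true,0,false); (3,true,4,true); (3,true,5,true); (3,true,7,false); (3,true,9,true); (4,false,0,true); (4,false,3,false); (4,false,6,false); (4,false,8,false); (4,false,10,true); (4,true,0,false); (4,true,3,true); (4,true,6,true); (4,true,8,true); (4,true,10,false); (5,false,1,true); (5,false,3,false);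 (5,false,6,false); (5,false,7,true); (5,false,8,false); (5,true,1,false); (5,true,3,true); (5,true,6,true); (5,true,7,false); (5,true,8,true); (6,false,1,true); (6,false,4,false); (6,false,5,false); (6,false,9,false); (6,false,11,true); (6,true,1,false); (6,true,4,true); (6,true,5,true); (6,true,9,true); (6,true,11,false); (7,false,2,false); (7,false,3,true); (7,false,5,true); (7,false,10,false); (7,false,11,false); (7,true,2,true); (7,true,3,false); (7,true,5,false); (7,true,10,true); (7,true,11,true); (8,false,2,true); (8,false,4,false); (8,false,5,false); (8,false,9,false); (8,false,10,true); (8,true,2,false); (8,true,4,true); (8,true,5,true); (8,true,9,true); (8,true,10,false); (9,false,2,true); (9,false,3,false); (9,false,6,false); (9,false,8,false); (9,false,11,true); (9,true,2,false); (9,true,3,true); (9,true,6,true); (9,true,8,true); (9,true,11,false); (10,false,1,false); (10,false,4,true); (10,false,7,false); (10,false,8,true); (10,false,11,false); (10,true,1,true); (10,true,4,false); (10,true,7,true); (10,true,8,false); (10,true,11,true); (11,false,0,false); (11,false,6,true); (11,false,7,false); (11,false,9,true); (11,false,10,false); (11,true,0,true); (11,true,6,false); (11,true,7,true); (11,true,9,false); (11,true,10,true)].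

Definition he := (nat * bool)%type.
Definition hes : seq he := [seq (i, s) | i <- iota 0 12, s <- [:: false; true]].
Definition near (h : he) := nearn h.1 h.2.
Definition far (h : he) := nearn h.1 (~~ h.2).
Definition flip (h : he) : he := (h.1, ~~ h.2).
Definition GR (g h : he) : bool := (g == h) || ((g.1, g.2, h.1, h.2) \in GRtab).
Definition HEv (v : nat) : seq he := [seq h <- hes | near h == v].
Definition parn (n : nat) : bool := nth false [:: false; true; true; false; true; false; false; true] n.
Definition adjN (u c : nat) : bool := has (fun g => far g == c) (HEv u).

Definition C0b := all (fun i => all (fun s => all (fun j => all (fun s' =>
   (i != j) ==> goodN (swN i s j s') ==> GR (i, s) (j, s')) [:: false; true]) (iota 0 12)) [:: false; true]) (iota 0 12).
Lemma C0 : C0b.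
Proof. vm_compute. reflexivity. Qed.

Definition C1b := all (fun g => all (fun h => GR g h ==> (parn (near g) == parn (near h))) hes) hes.
Lemma C1 : C1b. Proof. vm_compute. reflexivity. Qed.

Definition C2b := all (fun g => all (fun h => all (fun g' =>
  (near g != near h) ==> GR g h ==> (near g' == near h) ==> (far g' == far g) ==> (h == g')) hes) hes) hes.
Lemma C2 : C2b. Proof. vm_compute. reflexivity. Qed.

Definition C3b := all (fun g => all (fun g' => all (fun h =>
  (near g != near g') ==> (far g == far g') ==> (near h != far g) ==>
    ~~ (GR (flip g) h && GR (flip g') h)) hes) hes) hes.
Lemma C3 : C3b. Proof. vm_compute. reflexivity. Qed.

Definition C4b := [&& all (fun h => GR (7, false) h ==> (h == (2, false))) (HEv 0),
   ~~ GR (7, false) (8, true), (2, false) \in HEv 0, (8, true) \in HEv 5, (7, false) \in HEv 3,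
   far (2, false) == far (8, true),
   all (fun h => GR (6, false) h ==> (h == (4, false))) (HEv 1),
   ~~ GR (6, false) (8, false), (4, false) \in HEv 1, (8, false) \in HEv 4, (6, false) \in HEv 2 &
   far (4, false) == far (8, false)].
Lemma C4 : C4b. Proof. vm_compute. reflexivity. Qed.

Definition pairs : seq (nat * nat) :=
  [:: (0,3);(0,5);(0,6);(3,5);(3,6);(5,6);(1,2);(1,4);(1,7);(2,4);(2,7);(4,7)].
Definition Bfrom (bl : seq bool) (u v : nat) : bool :=
  (u == v) || nth false bl (index (minn u v, maxn u v) pairs).
Fixpoint undupB (B : nat -> nat -> bool) (l : seq nat) : seq nat :=
  if l is x :: l' then (if has (B x) l' then undupB B l' else x :: undupB B l') else [::].
Definition V8 := iota 0 8.
Definition combOK (B : nat -> nat -> bool) : bool :=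
  if all (fun u => all (fun v => if B u v then all (fun w => if B v w then B u w else true) V8 else true) V8) V8 then
  if all (fun u => all (fun v => if (u != v) && B u v then all (fun c =>
       if adjN u c && adjN v c then all (fun w => if w != c then ~~ B w c else true) V8 else true) V8 else true) V8) V8 then
  ~~ (B 0 3 && B 0 5) && ~~ (B 1 2 && B 1 4) else false else false.
Definition Comb := all (fun bl => if combOK (Bfrom bl) then (6 <= size (undupB (Bfrom bl) V8)) else true) (allbits 12).
Lemma Comb_ok : Comb. Proof. vm_compute. reflexivity. Qed.

Definition Lb (lam : nat -> cet) (h : he) : cet := if h.2 then hat (lam h.1) else lam h.1.

Definition toOrd (p : nat * nat) : 'I_8 * 'I_8 := ((inord p.1 : 'I_8), (inord p.2 : 'I_8)).

Definition hlN (es : seq (nat * nat)) (lam : nat -> cet) (v : nat) : seq cet :=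
  flatten [seq (if (nth (0,0) es i).1 == v then [:: lam i] else [::]) ++
               (if (nth (0,0) es i).2 == v then [:: hat (lam i)] else [::])
          | i <- iota 0 (size es)].

Definition bnd8 (es : seq (nat * nat)) := all (fun e => (e.1 < 8) && (e.2 < 8)) es.

Lemma inord_eq (a : nat) (v : 'I_8) : a < 8 -> ((inord a : 'I_8) == v) = (a == v).
Proof. by move=> Ha; rewrite -val_eqE /= inordK. Qed.

Lemma hl_map es lam (v : 'I_8) : bnd8 es ->
  @hl (MGraph (map toOrd es)) lam v = hlN es lam v.
Proof.
move=> /allP Hb; rewrite /hl /hlN /= size_map; congr flatten.
apply/eq_in_map => i; rewrite mem_iota add0n => /andP [_ Hi].
rewrite (nth_map (0,0)) //.
have /andP [H1 H2] := Hb _ (mem_nth (0,0) Hi).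
by rewrite /toOrd /= !inord_eq.
Qed.

Lemma Q3E : Q3 = MGraph (map toOrd Q3_edges_nat).
Proof. by []. Qed.

Lemma hl_Q3 lam (v : 'I_8) : @hl Q3 lam v = map (Lb lam) (HEv v).
Proof.
have -> : @hl Q3 lam v = hlN Q3_edges_nat lam v by exact: (@hl_map Q3_edges_nat lam v).
case: v => m Hm /=.
by do 8 (case: m Hm => [|m] Hm; first by vm_compute).
Qed.

Lemma count_hlN es lam v (P : pred cet) : count P (hlN es lam v) =
  \sum_(k <- iota 0 (size es)) (((nth (0,0) es k).1 == v) && P (lam k) +
                                ((nth (0,0) es k).2 == v) && P (hat (lam k))).
Proof.
rewrite /hlN count_flatten sumn_map big_map; apply: eq_bigr => i _.
rewrite count_cat; case: ifP => _; case: ifP => _ /=; by rewrite ?addn0.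
Qed.

Lemma sum_swap (F G : nat -> nat) i j n : i < n -> j < n -> i != j ->
  (forall k, k < n -> k != i -> k != j -> F k = G k) -> F i + F j = G i + G j ->
  \sum_(k <- iota 0 n) F k = \sum_(k <- iota 0 n) G k.
Proof.
move=> Hi Hj Hij HFG Hs.
have Ui : uniq (iota 0 n) by exact: iota_uniq.
have Ii : i \in iota 0 n by rewrite mem_iota.
have Ij : j \in rem i (iota 0 n) by rewrite (mem_rem_uniq _ Ui) inE eq_sym Hij mem_iota.
rewrite (big_rem _ Ii) [in RHS](big_rem _ Ii) /=.
rewrite (big_rem _ Ij) [in RHS](big_rem _ Ij) /=.
rewrite !addnA Hs; congr (_ + _).
rewrite big_seq [RHS]big_seq; apply: eq_bigr => k.
have U2 : uniq (rem i (iota 0 n)) by exact: rem_uniq.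
rewrite (mem_rem_uniq _ U2) inE (mem_rem_uniq _ Ui) inE mem_iota add0n.
by case/andP => Hkj /andP [Hki /andP [_ Hk]]; apply: HFG.
Qed.

Definition swG i s j s' : mgraph := MGraph (map toOrd (swN i s j s')).
Definition lamsw (lam : nat -> cet) i s j : nat -> cet :=
  fun k => if (k == i) || (k == j) then Lb lam (i, s) else lam k.

Lemma nth_Q3 i : nth (0,0) Q3_edges_nat i = (nearn i false, nearn i true).
Proof. by rewrite /nearn; case: (nth _ _ _). Qed.

Lemma sw_perm lam i s j s' (v : nat) : i < 12 -> j < 12 -> i != j ->
  Lb lam (i, s) = Lb lam (j, s') ->
  perm_eq (hlN (swN i s j s') (lamsw lam i s j) v) (hlN Q3_edges_nat lam v).
Proof.
move=> Hi Hj Hij HL; apply/permP => P.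
rewrite !count_hlN /swN size_map size_iota.
apply: (sum_swap Hi Hj Hij).
  move=> k Hk Hki Hkj.
  rewrite (nth_map 0) ?size_iota // nth_iota // add0n /swE /lamsw.
  by rewrite (negbTE Hki) (negbTE Hkj).
rewrite (nth_map 0) ?size_iota // nth_iota // add0n.
rewrite (nth_map 0) ?size_iota // nth_iota // add0n.
have Hji : (j == i) = false by rewrite eq_sym (negbTE Hij).
rewrite /swE /lamsw !eqxx (negbTE Hij) Hji /=.
rewrite !nth_Q3 /=.
move: HL; rewrite /Lb /=.
case: s; case: s' => /= HL.
- have E : lam j = lam i by rewrite -[lam j]hatK -HL hatK.
  rewrite E ?hatK; lia.
- rewrite -HL ?hatK; lia.
- have E : lam j = hat (lam i) by rewrite HL hatK.
  rewrite E ?hatK; lia.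
- rewrite -HL; lia.
Qed.

Lemma mult_map es (u v : 'I_8) : bnd8 es ->
  mult (MGraph (map toOrd es)) u v = multN es u v.
Proof.
move=> /allP Hb; rewrite /mult /multN /= count_map; apply: eq_in_count => e He.
have /andP [H1 H2] := Hb _ He.
case: e He H1 H2 => a b He H1 H2.
by rewrite /toOrd /= !xpair_eqE !inord_eq.
Qed.

Lemma bnd8_Q3 : bnd8 Q3_edges_nat. Proof. by []. Qed.

Definition QF := all (fun u => all (fun v => (multN Q3_edges_nat u v <= (u != v)) &&
   ((0 < multN Q3_edges_nat u v) ==> (parn u != parn v))) (iota 0 8)) (iota 0 8).
Lemma QF_ok : QF. Proof. by vm_compute. Qed.

Lemma multQ3 (p q : 'I_8) : mult Q3 p q = multN Q3_edges_nat p q.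
Proof. exact: (@mult_map Q3_edges_nat p q bnd8_Q3). Qed.

Lemma QF1 (p q : 'I_8) : mult Q3 p q <= (p != q).
Proof.
rewrite multQ3; have Hp : (p : nat) \in iota 0 8 by rewrite mem_iota /=.
have Hq : (q : nat) \in iota 0 8 by rewrite mem_iota /=.
have /allP H := QF_ok; have /allP H2 := H p Hp.
by case/andP: (H2 q Hq).
Qed.

Lemma QF2 (p q : 'I_8) : 0 < mult Q3 p q -> parn p != parn q.
Proof.
rewrite multQ3; have Hp : (p : nat) \in iota 0 8 by rewrite mem_iota /=.
have Hq : (q : nat) \in iota 0 8 by rewrite mem_iota /=.
have /allP H := QF_ok; have /allP H2 := H p Hp.
by case/andP: (H2 q Hq) => _ /implyP.
Qed.

Lemma allbits_size n l : size l = n -> l \in allbits n.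
Proof.
elim: n l => [|n IH] [|b l] //= [Hl].
case: b; rewrite /= !mem_cat; apply/orP; [right; apply/orP; left | left];
  apply/mapP; exists l => //; exact: IH.
Qed.

Lemma iso_goodN es : bnd8 es -> mg_iso (MGraph (map toOrd es)) Q3 -> goodN es.
Proof.
move=> Hb [f [[g fK gK] Hf]].
have finj : injective f by exact: can_inj fK.
apply/andP; split.
  apply/allP => u; rewrite mem_iota add0n => /andP [_ Hu].
  apply/allP => v; rewrite mem_iota add0n => /andP [_ Hv].
  have := Hf (inord u) (inord v); rewrite mult_map // !inordK // => ->.
  apply: (leq_trans (QF1 _ _)).
  rewrite (inj_eq finj) -val_eqE /= !inordK //.
apply/hasP; exists [seq parn (f (inord k)) | k <- iota 0 8].
  by apply: allbits_size; rewrite size_map size_iota.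
apply/allP => e He.
have /andP [H1 H2] := (allP Hb) _ He.
rewrite (nth_map 0) ?size_iota // (nth_map 0) ?size_iota // !nth_iota // !add0n.
apply: QF2; rewrite -Hf mult_map // !inordK //.
rewrite /multN -has_count; apply/hasP; exists e => //.
by case: e {He H1 H2} => a b; rewrite eqxx.
Qed.

Local Open Scope fset_scope.

Definition BndSw := all (fun i => all (fun s => all (fun j => all (fun s' =>
   bnd8 (swN i s j s')) [:: false; true]) (iota 0 12)) [:: false; true]) (iota 0 12).
Lemma BndSw_ok : BndSw. Proof. by vm_compute. Qed.

Lemma mem_hes (g : he) : (g \in hes) = (g.1 < 12).
Proof.
case: g => i s /=; apply/idP/idP.
  case/allpairsP => [[a b] [Ha _ E]]; case: E => -> _.
  by move: Ha; rewrite mem_iota.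
move=> Hi; apply/allpairsP; exists (i, s); rewrite mem_iota add0n Hi.
by case: s.
Qed.

Lemma hat_neq2 (x : cet) : x = hat x -> False.
Proof. by move=> E; have := hat_neq x; rewrite -E eqxx. Qed.

Lemma GR_of_eq P lam : scenario3 P Q3 -> (forall v : 'I_8, @tile_at Q3 lam v \in P) ->
  forall g h, g \in hes -> h \in hes -> Lb lam g = Lb lam h -> GR g h.
Proof.
move=> [_ _ _ Hiso] HP [i s] [j s'].
rewrite !mem_hes /= => Hi Hj HL.
case: (eqVneq i j) => [Eij | Nij].
  subst j; case: (eqVneq s s') => [-> | Ns]; first by rewrite /GR eqxx.
  exfalso; move: HL; rewrite /Lb /=.
  case: s s' Ns => [] [] //= _ E.
    by have := hat_neq (lam i); rewrite E eqxx.
  by have := hat_neq (lam i); rewrite -E eqxx.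
have Hi8 : i \in iota 0 12 by rewrite mem_iota.
have Hj8 : j \in iota 0 12 by rewrite mem_iota.
have Hs2 : s \in [:: false; true] by destruct s.
have Hs2' : s' \in [:: false; true] by destruct s'.
have Hb : bnd8 (swN i s j s').
  have /allP H1 := BndSw_ok; have /allP H2 := H1 i Hi8; have /allP H3 := H2 s Hs2.
  have /allP H4 := H3 j Hj8; exact: H4 s' Hs2'.
have Hg : goodN (swN i s j s').
  apply: iso_goodN => //; apply: (Hiso (swG i s j s')) => //.
  split => //; exists (lamsw lam i s j) => v.
  rewrite tile_atE (hl_map _ _ Hb).
  have -> : seq_mset (hlN (swN i s j s') (lamsw lam i s j) v) = @tile_at Q3 lam v.
    rewrite tile_atE.
    have -> : @hl Q3 lam v = hlN Q3_edges_nat lam v by exact: (@hl_map Q3_edges_nat lam v).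
    by apply/eq_seq_msetP; apply: sw_perm.
  exact: HP.
have /allP H1 := C0; have /allP H2 := H1 i Hi8; have /allP H3 := H2 s Hs2.
have /allP H4 := H3 j Hj8; have := H4 s' Hs2'.
by rewrite Nij Hg.
Qed.

Local Open Scope fset_scope.

Definition Tn (lam : nat -> cet) (n : nat) : tile := @tile_at Q3 lam (inord n : 'I_8).

Lemma TnE lam n : n < 8 -> Tn lam n = seq_mset (map (Lb lam) (HEv n)).
Proof. move=> Hn; rewrite /Tn tile_atE hl_Q3 inordK; [reflexivity | exact Hn]. Qed.

Lemma HEvP v h : h \in HEv v -> h \in hes /\ near h = v.
Proof. by rewrite mem_filter => /andP [/eqP -> ->]. Qed.

Lemma Mlem lam u v h : u < 8 -> v < 8 -> Tn lam u = Tn lam v -> h \in HEv u ->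
  exists2 h', h' \in HEv v & Lb lam h = Lb lam h'.
Proof.
move=> Hu Hv; rewrite (TnE lam Hu) (TnE lam Hv) => /eq_seq_msetP Hp Hh.
have : Lb lam h \in map (Lb lam) (HEv v).
  rewrite -(perm_mem Hp); exact: map_f.
case/mapP => h' H1 H2; exists h'; [exact: H1 | exact: H2].
Qed.

Definition HR_prop lam := forall g h, g \in hes -> h \in hes -> Lb lam g = Lb lam h -> GR g h.

Lemma flip_hes g : g \in hes -> flip g \in hes.
Proof. by rewrite !mem_hes. Qed.

Lemma flip_HEv g : g \in hes -> flip g \in HEv (far g).
Proof. by move=> Hg; rewrite mem_filter flip_hes // andbT. Qed.

Lemma Lb_flip lam g : Lb lam (flip g) = hat (Lb lam g).
Proof. by case: g => i [] /=; rewrite /Lb /= ?hatK. Qed.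

Definition V8ne := all (fun v => HEv v != [::]) (iota 0 8).
Lemma V8ne_ok : V8ne. Proof. by vm_compute. Qed.

Lemma F1 lam u v : HR_prop lam -> u < 8 -> v < 8 -> Tn lam u = Tn lam v -> parn u = parn v.
Proof.
move=> HR Hu Hv E.
have : HEv u != [::] by apply: (allP V8ne_ok); rewrite mem_iota.
case Eh: (HEv u) => [|h l] // _.
have Hh : h \in HEv u by rewrite Eh inE eqxx.
have [h' Hh' HL] := Mlem Hu Hv E Hh.
have [Hh1 Hh2] := HEvP Hh; have [Hh1' Hh2'] := HEvP Hh'.
have := HR _ _ Hh1 Hh1' HL => Hgr.
have /allP C := C1; have /allP C' := C h Hh1.
by have := C' h' Hh1'; rewrite Hgr Hh2 Hh2' /= => /eqP.
Qed.

Lemma F2a lam u v g g' : HR_prop lam -> u < 8 -> v < 8 -> u != v -> Tn lam u = Tn lam v ->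
  g \in HEv u -> g' \in HEv v -> far g = far g' -> Lb lam g = Lb lam g'.
Proof.
move=> HR Hu Hv Nuv E Hg Hg' Hf.
have [h Hh HL] := Mlem Hu Hv E Hg.
have [Hg1 Hg2] := HEvP Hg; have [Hg1' Hg2'] := HEvP Hg'; have [Hh1 Hh2] := HEvP Hh.
have Hgr := HR _ _ Hg1 Hh1 HL.
have /allP C := C2; have /allP C' := C g Hg1; have /allP C'' := C' h Hh1.
have := C'' g' Hg1'; rewrite Hg2 Hh2 Hg2' Nuv Hgr eqxx Hf eqxx /= => /eqP Ehg.
by rewrite HL Ehg.
Qed.

Lemma F2 lam u v c w : HR_prop lam -> u < 8 -> v < 8 -> c < 8 -> w < 8 -> u != v ->
  Tn lam u = Tn lam v -> adjN u c -> adjN v c -> w != c -> Tn lam w != Tn lam c.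
Proof.
move=> HR Hu Hv Hc Hw Nuv E /hasP [g Hg /eqP Hgc] /hasP [g' Hg' /eqP Hgc'] Nwc.
apply/eqP => Ewc.
have HL := F2a HR Hu Hv Nuv E Hg Hg' (etrans Hgc (esym Hgc')).
have [Hg1 Hg2] := HEvP Hg; have [Hg1' Hg2'] := HEvP Hg'.
have Hfg : flip g \in HEv c by rewrite -Hgc; exact: flip_HEv.
have [h Hh HL2] := Mlem Hc Hw (esym Ewc) Hfg.
have [Hh1 Hh2] := HEvP Hh.
have G1 := HR _ _ (flip_hes Hg1) Hh1 HL2.
have G2 : GR (flip g') h.
  apply: HR => //; first exact: flip_hes.
  by rewrite -HL2 !Lb_flip HL.
have /allP C := C3; have /allP C' := C g Hg1; have /allP C'' := C' g' Hg1'.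
have := C'' h Hh1; rewrite Hg2 Hg2' Nuv Hgc Hgc' eqxx Hh2 Nwc /=.
by rewrite G1 G2.
Qed.

Lemma K1 : all (fun h => GR (7, false) h ==> (h == (2, false))) (HEv 0). Proof. by vm_compute. Qed.
Lemma K2 : GR (7, false) (8, true) = false. Proof. by vm_compute. Qed.
Lemma K3 : all (fun h => GR (6, false) h ==> (h == (4, false))) (HEv 1). Proof. by vm_compute. Qed.
Lemma K4 : GR (6, false) (8, false) = false. Proof. by vm_compute. Qed.
Lemma m20 : (2, false) \in HEv 0. Proof. by vm_compute. Qed.
Lemma m85 : (8, true) \in HEv 5. Proof. by vm_compute. Qed.
Lemma m73 : (7, false) \in HEv 3. Proof. by vm_compute. Qed.
Lemma m41 : (4, false) \in HEv 1. Proof. by vm_compute. Qed.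
Lemma m84 : (8, false) \in HEv 4. Proof. by vm_compute. Qed.
Lemma m62 : (6, false) \in HEv 2. Proof. by vm_compute. Qed.

Lemma F3e lam : HR_prop lam -> Tn lam 0 = Tn lam 3 -> Tn lam 0 = Tn lam 5 -> False.
Proof.
move=> HR E03 E05.
have HL1 := @F2a lam 0 5 (2, false) (8, true) HR erefl erefl erefl E05 m20 m85 erefl.
have [h Hh HL2] := @Mlem lam 3 0 (7, false) erefl erefl (esym E03) m73.
have [Hh1 _] := HEvP Hh.
have G := HR _ _ (proj1 (HEvP m73)) Hh1 HL2.
have := (allP K1) h Hh; rewrite G => /eqP Eh.
have G2 : GR (7, false) (8, true).
  apply: HR; [exact: (proj1 (HEvP m73)) | exact: (proj1 (HEvP m85)) |].
  rewrite HL2 Eh; exact: HL1.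
by rewrite K2 in G2.
Qed.

Lemma F3o lam : HR_prop lam -> Tn lam 1 = Tn lam 2 -> Tn lam 1 = Tn lam 4 -> False.
Proof.
move=> HR E12 E14.
have HL1 := @F2a lam 1 4 (4, false) (8, false) HR erefl erefl erefl E14 m41 m84 erefl.
have [h Hh HL2] := @Mlem lam 2 1 (6, false) erefl erefl (esym E12) m62.
have [Hh1 _] := HEvP Hh.
have G := HR _ _ (proj1 (HEvP m62)) Hh1 HL2.
have := (allP K3) h Hh; rewrite G => /eqP Eh.
have G2 : GR (6, false) (8, false).
  apply: HR; [exact: (proj1 (HEvP m62)) | exact: (proj1 (HEvP m84)) |].
  rewrite HL2 Eh; exact: HL1.
by rewrite K4 in G2.
Qed.

Local Open Scope fset_scope.

Definition PX := all (fun u => all (fun v =>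
  if (u != v) && ((minn u v, maxn u v) \notin pairs) then parn u != parn v else true) V8) V8.
Lemma PX_ok : PX. Proof. by vm_compute. Qed.

Lemma inV8 n : (n \in V8) = (n < 8).
Proof. by rewrite mem_iota. Qed.

Lemma EB lam : HR_prop lam -> forall u v, u < 8 -> v < 8 ->
  Bfrom [seq Tn lam p.1 == Tn lam p.2 | p <- pairs] u v = (Tn lam u == Tn lam v).
Proof.
move=> HR u v Hu Hv; rewrite /Bfrom.
case: (eqVneq u v) => [<- | Nuv]; first by rewrite !eqxx.
rewrite ?orFb.
case Hp: ((minn u v, maxn u v) \in pairs).
  rewrite (nth_map (0,0)); last by rewrite index_mem.
  rewrite nth_index; last by rewrite Hp.
  rewrite [_.1]/= [_.2]/=.
  case: (leqP u v) => H; first by [].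
  exact: eq_sym.
rewrite nth_default; last by rewrite size_map memNindex ?Hp.
apply/esym/eqP => E.
have := F1 HR Hu Hv E => Ep.
have Hu' : u \in V8 by rewrite inV8.
have Hv' : v \in V8 by rewrite inV8.
have := (allP ((allP PX_ok) u Hu')) v Hv'.
by rewrite Nuv Hp Ep eqxx.
Qed.

Lemma combOK_of (B : nat -> nat -> bool) :
  (forall u v w, u < 8 -> v < 8 -> w < 8 -> B u v -> B v w -> B u w) ->
  (forall u v c w, u < 8 -> v < 8 -> c < 8 -> w < 8 -> u != v -> B u v ->
      adjN u c -> adjN v c -> w != c -> ~~ B w c) ->
  ~~ (B 0 3 && B 0 5) -> ~~ (B 1 2 && B 1 4) -> combOK B.
Proof.
move=> Ht Hf Hf1 Hf2; rewrite /combOK.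
have -> : all (fun u => all (fun v => if B u v then all (fun w => if B v w then B u w else true) V8 else true) V8) V8 = true.
  apply/allP => u; rewrite inV8 => Hu; apply/allP => v; rewrite inV8 => Hv.
  case E1: (B u v) => //; apply/allP => w; rewrite inV8 => Hw.
  case E2: (B v w) => //; exact: Ht E1 E2.
have -> : all (fun u => all (fun v => if (u != v) && B u v then all (fun c =>
       if adjN u c && adjN v c then all (fun w => if w != c then ~~ B w c else true) V8 else true) V8 else true) V8) V8 = true.
  apply/allP => u; rewrite inV8 => Hu; apply/allP => v; rewrite inV8 => Hv.
  case E1: ((u != v) && B u v) => //; case/andP: E1 => N1 E1.
  apply/allP => c; rewrite inV8 => Hc.
  case E2: (adjN u c && adjN v c) => //; case/andP: E2 => A1 A2.
  apply/allP => w; rewrite inV8 => Hw.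
  case E3: (w != c) => //; exact: Hf N1 E1 A1 A2 E3.
by rewrite Hf1 Hf2.
Qed.

Lemma undupB_size (B : nat -> nat -> bool) (f : nat -> tile) l :
  (forall u v, u \in l -> v \in l -> B u v = (f u == f v)) ->
  size (undupB B l) = size (undup (map f l)).
Proof.
elim: l => [|x l IH] //= HB.
have IH' : size (undupB B l) = size (undup (map f l)).
  by apply: IH => u v Hu Hv; apply: HB; rewrite inE ?Hu ?Hv orbT.
have -> : has (B x) l = (f x \in map f l).
  rewrite -has_pred1 has_map; apply: eq_in_has => y Hy /=.
  by rewrite HB ?inE ?eqxx ?Hy ?orbT // eq_sym.
by case: (f x \in map f l) => /=; rewrite IH'.
Qed.

Lemma lower P : scenario3 P Q3 -> 6 <= #|` P|.
Proof.
move=> Hs; have [_ [_ [lam HP]] _ _] := Hs.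
have HR : HR_prop lam := GR_of_eq Hs HP.
set bl := [seq Tn lam p.1 == Tn lam p.2 | p <- pairs].
have HB := EB HR.
have Hok : combOK (Bfrom bl).
  apply: combOK_of.
  - move=> u v w Hu Hv Hw; rewrite (HB u v Hu Hv) (HB v w Hv Hw) (HB u w Hu Hw).
    move=> /eqP -> /eqP ->; exact: eqxx.
  - move=> u v c w Hu Hv Hc Hw N1; rewrite (HB u v Hu Hv) (HB w c Hw Hc) => /eqP E1 A1 A2 N2.
    exact: F2 HR Hu Hv Hc Hw N1 E1 A1 A2 N2.
  - rewrite (HB 0 3 erefl erefl) (HB 0 5 erefl erefl).
    apply/negP => /andP [/eqP E1 /eqP E2]; exact: F3e HR E1 E2.
  - rewrite (HB 1 2 erefl erefl) (HB 1 4 erefl erefl).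
    apply/negP => /andP [/eqP E1 /eqP E2]; exact: F3o HR E1 E2.
have Hbl : bl \in allbits 12 by apply: allbits_size; rewrite size_map.
have := (allP Comb_ok) bl Hbl; rewrite Hok.
rewrite (@undupB_size _ (Tn lam)); last first.
  move=> u v; rewrite !inV8 => Hu Hv; exact: HB.
move=> H6; apply: (leq_trans H6).
rewrite -card_fseq; apply: fsubset_leq_card; apply/fsubsetP => x.
rewrite in_fset => /mapP [k Hk ->]; rewrite /Tn; exact: HP.
Qed.


Definition Q3pairs : seq (nat * nat) :=
  [seq p <- [seq (a, b) | a <- iota 0 8, b <- iota 0 8] | 0 < multN Q3_edges_nat p.1 p.2].

Definition QP := all (fun a => all (fun b => (0 < multN Q3_edges_nat a b) ==> ((a, b) \in Q3pairs)) (iota 0 8)) (iota 0 8).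
Lemma QP_ok : QP. Proof. by vm_compute. Qed.

Lemma sumQ3 (p : 'I_8) : \sum_(q < 8) mult Q3 p q = 3.
Proof.
under eq_bigr => q _ do rewrite multQ3.
rewrite !big_ord_recr big_ord0 /=.
case: p => p Hp /=.
by do 8 (case: p Hp => [|p] Hp; first by vm_compute).
Qed.

Lemma assemble (es : seq ('I_8 * 'I_8)) (L : seq 'I_8) (x0 : 'I_8) :
  uniq L -> size L = 8 ->
  (forall pq, pq \in Q3pairs -> 0 < mult (MGraph es) (nth x0 L pq.1) (nth x0 L pq.2)) ->
  (forall u, \sum_(w < 8) mult (MGraph es) u w <= 3) ->
  mg_iso (MGraph es) Q3.
Proof.
move=> UL SL HQ Hdeg.
pose g := fun p : 'I_8 => nth x0 L p.
have ginj : injective g.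
  move=> p q; rewrite /g => E; apply: val_inj => /=.
  by apply/eqP; rewrite -(nth_uniq x0 _ _ UL) ?SL // E.
have Hle : forall p q : 'I_8, mult Q3 p q <= mult (MGraph es) (g p) (g q).
  move=> p q; have := QF1 p q.
  case E: (mult Q3 p q) => [|[|m]] // H; last by move: H; case: (p != q).
  apply: (HQ (nat_of_ord p, nat_of_ord q)).
  have Hp : (p : nat) \in iota 0 8 by rewrite mem_iota /=.
  have Hq : (q : nat) \in iota 0 8 by rewrite mem_iota /=.
  have /allP H1 := QP_ok.
  have /allP H2 := H1 p Hp.
  have := H2 q Hq; rewrite -multQ3 E /=; exact.
have Hsum : forall p : 'I_8, \sum_(q < 8) mult (MGraph es) (g p) (g q) = 3.
  move=> p; apply/eqP; rewrite eqn_leq; apply/andP; split.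
    by have := Hdeg (g p); rewrite (reindex_inj ginj).
  apply: (@leq_trans (\sum_(q < 8) mult Q3 p q)); first by rewrite sumQ3.
  by apply: leq_sum => q _; apply: Hle.
have Heq : forall p q : 'I_8, mult (MGraph es) (g p) (g q) = mult Q3 p q.
  move=> p q.
  have H0 : \sum_(q < 8) (mult (MGraph es) (g p) (g q) - mult Q3 p q) = 0.
    by rewrite sumnB ?Hsum ?sumQ3 // => i _; apply: Hle.
  move/eqP: H0; rewrite sum_nat_eq0 => /forallP /(_ q) /implyP /(_ isT).
  rewrite subn_eq0 => H1; apply/eqP; rewrite eqn_leq H1; exact: Hle.
pose f := invF ginj.
exists f; split.
  by exists g; [exact: (f_invF ginj) | exact: (invF_f ginj)].
move=> u v.
by rewrite -{1}(f_invF ginj u) -{1}(f_invF ginj v) Heq.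
Qed.

Local Open Scope fset_scope.

Definition X n : cet := (n, false).
Definition Xh n : cet := (n, true).
Definition tl : seq (seq cet) :=
  [:: [:: X 0; X 1; X 2]; [:: Xh 0; Xh 0; X 5]; [:: Xh 1; Xh 1; X 5];
      [:: Xh 2; X 3; X 4]; [:: Xh 5; Xh 3; Xh 3]; [:: Xh 5; Xh 4; Xh 4]].
Definition tk (k : nat) : seq cet := nth [::] tl k.
Definition P0 : {fset tile} := [fset x in map seq_mset tl].
Definition lam0 (k : nat) : cet :=
  nth (X 0) [:: X 0; X 1; X 2; Xh 0; X 5; Xh 1; X 5; X 2; X 3; X 4; Xh 3; Xh 4] k.

Lemma P0_mem T : T \in P0 -> index T (map seq_mset tl) < 6 /\
   T = seq_mset (tk (index T (map seq_mset tl))).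
Proof.
rewrite in_fset => HT.
have Hi : index T (map seq_mset tl) < size tl by rewrite -(size_map seq_mset tl) index_mem.
split; first exact: Hi.
by rewrite /tk -(nth_map [::] (seq_mset [::])) // nth_index.
Qed.

Lemma P0_in k : k < 6 -> seq_mset (tk k) \in P0.
Proof. by move=> Hk; rewrite in_fset; apply: map_f; apply: mem_nth. Qed.

Definition TLinj := all (fun t => all (fun t' => perm_eq t t' ==> (t == t')) tl) tl.
Lemma TLinj_ok : TLinj. Proof. by vm_compute. Qed.

Lemma card_P0 : #|` P0| = 6.
Proof.
rewrite /P0 card_fseq undup_id //.
rewrite map_inj_in_uniq; first by vm_compute.
move=> t t' Ht Ht' /eqP E.
have := (allP ((allP TLinj_ok) t Ht)) t' Ht'.
move/eqP: E => E; have Hp : perm_eq t t' by apply/eq_seq_msetP.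
by rewrite Hp => /eqP.
Qed.

Definition POT := all (fun k => all (fun x => has (fun k' => hat x \in tk k') (iota 0 6)) (tk k)) (iota 0 6).
Lemma POT_ok : POT. Proof. by vm_compute. Qed.

Lemma count_pos (x : cet) s : (0 < count_mem x s) = (x \in s).
Proof. by rewrite -has_count has_pred1. Qed.

Lemma pot_P0 : is_pot P0.
Proof.
move=> t x /P0_mem [Hk ->]; set k := index _ _ => Hx.
rewrite mset_seqE count_pos in Hx.
have Hk' : k \in iota 0 6 by rewrite mem_iota.
have /hasP [k' Hk'' Hh] := (allP ((allP POT_ok) k Hk')) x Hx.
exists (seq_mset (tk k')); first by apply: P0_in; move: Hk''; rewrite mem_iota.
by rewrite mset_seqE count_pos.
Qed.

Definition HQ0 := all (fun v => has (fun k => perm_eq (map (Lb lam0) (HEv v)) (tk k)) (iota 0 6)) (iota 0 8).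
Lemma HQ0_ok : HQ0. Proof. by vm_compute. Qed.

Lemma inO_Q3 : in_O P0 Q3.
Proof.
split; first by [].
exists lam0 => v; rewrite tile_atE hl_Q3.
have Hv : (v : nat) \in iota 0 8 by rewrite mem_iota /=.
have /hasP [k Hk Hp] := (allP HQ0_ok) v Hv.
have -> : seq_mset (map (Lb lam0) (HEv v)) = seq_mset (tk k) by apply/eq_seq_msetP.
by apply: P0_in; move: Hk; rewrite mem_iota.
Qed.

Local Open Scope fset_scope.

Lemma decomp6 (F : nat -> nat) t : t < 6 -> F t = \sum_(k < 6) (t == k) * F k.
Proof.
move=> Ht; rewrite (bigD1 (Ordinal Ht)) //= eqxx mul1n big1 ?addn0 // => k Hk.
have -> : (t == k) = false.
  apply/negbTE; apply: contra Hk => /eqP E; apply/eqP; apply: val_inj => /=; by rewrite E.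
by rewrite mul0n.
Qed.

Lemma sum_tau n (tau : 'I_n -> nat) (F : nat -> nat) : (forall v, tau v < 6) ->
  \sum_(v < n) F (tau v) = \sum_(k < 6) (\sum_(v < n) (tau v == k)) * F k.
Proof.
move=> Ht.
under eq_bigr => v _ do rewrite (decomp6 F (Ht v)).
rewrite exchange_big /=; apply: eq_bigr => k _; by rewrite big_distrl.
Qed.

Lemma counts H lam : (forall v : 'I_(nv H), @tile_at H lam v \in P0) ->
  let tau := fun v => index (@tile_at H lam v) (map seq_mset tl) in
  let N := fun k => \sum_(v < nv H) (tau v == k) in
  nv H = 8 * N 1 /\ [/\ N 0 = 2 * N 1, N 2 = N 1, N 3 = 2 * N 1, N 4 = N 1 & N 5 = N 1].
Proof.
move=> HP tau N.
have Htau : forall v, tau v < 6 /\ @tile_at H lam v = seq_mset (tk (tau v)).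
  by move=> v; apply: P0_mem.
have Htau1 : forall v, tau v < 6 by move=> v; case: (Htau v).
have Hbal : forall y, \sum_(k < 6) N k * count_mem y (tk k) =
                      \sum_(k < 6) N k * count_mem (hat y) (tk k).
  move=> y; rewrite -!(sum_tau (fun k => count_mem _ (tk k)) Htau1).
  have := @balance H lam y.
  have E : forall z v, (@tile_at H lam v) z = count_mem z (tk (tau v)).
    by move=> z v; case: (Htau v) => _ ->; rewrite mset_seqE.
  by under eq_bigr => v _ do rewrite E; under [in RHS]eq_bigr => v _ do rewrite E.
have Hn : nv H = \sum_(k < 6) N k.
  rewrite -{1}(card_ord (nv H)) -sum1_card.
  have := sum_tau (fun _ => 1) Htau1; rewrite /= => ->.
  by apply: eq_bigr => k _; rewrite muln1.
have E0 := Hbal (X 0); have E1 := Hbal (X 1); have E2 := Hbal (X 2).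
have E3 := Hbal (X 3); have E4 := Hbal (X 4).
rewrite !big_ord_recr !big_ord0 /= in E0 E1 E2 E3 E4 Hn.

split; first lia.
split; lia.
Qed.

Local Open Scope fset_scope.

Lemma Q3pairsE : Q3pairs = [:: (0,1); (0,2); (0,4); (1,0); (1,3); (1,5); (2,0); (2,3); (2,6); (3,1); (3,2); (3,7); (4,0); (4,5); (4,6); (5,1); (5,4); (5,7); (6,2); (6,4); (6,7); (7,3); (7,5); (7,6)].
Proof. by vm_compute. Qed.

Lemma sum_card (tau : 'I_8 -> nat) k : \sum_(v < 8) (tau v == k) = #|[set v | tau v == k]|.
Proof.
rewrite -sum1_card [RHS]big_mkcond /=; apply: eq_bigr => v _; rewrite inE.
by case: (tau v == k).
Qed.

Lemma get1 (tau : 'I_8 -> nat) k : \sum_(v < 8) (tau v == k) = 1 ->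
  exists c, tau c = k /\ forall v, tau v = k -> v = c.
Proof.
rewrite sum_card => /eqP /cards1P [c Hc].
exists c; split.
  have : c \in [set v | tau v == k] by rewrite Hc in_set1.
  by rewrite inE => /eqP.
move=> v Hv; have : v \in [set v | tau v == k] by rewrite inE Hv.
by rewrite Hc in_set1 => /eqP.
Qed.

Lemma get2 (tau : 'I_8 -> nat) k : \sum_(v < 8) (tau v == k) = 2 ->
  exists a b, [/\ a != b, tau a = k, tau b = k & forall v, tau v = k -> v = a \/ v = b].
Proof.
rewrite sum_card => /eqP /cards2P [a [b [Nab Hab]]].
exists a, b; split => //.
- have : a \in [set v | tau v == k] by rewrite Hab !inE eqxx.
  by rewrite inE => /eqP.
- have : b \in [set v | tau v == k] by rewrite Hab !inE eqxx orbT.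
  by rewrite inE => /eqP.
move=> v Hv; have : v \in [set v | tau v == k] by rewrite inE Hv.
by rewrite Hab !inE => /orP [/eqP -> | /eqP ->]; [left | right].
Qed.

Lemma deg4 (es : seq ('I_8 * 'I_8)) (u w1 w2 w3 w4 : 'I_8) :
  uniq [:: w1; w2; w3; w4] ->
  0 < mult (MGraph es) u w1 -> 0 < mult (MGraph es) u w2 ->
  0 < mult (MGraph es) u w3 -> 0 < mult (MGraph es) u w4 ->
  4 <= \sum_(w < 8) mult (MGraph es) u w.
Proof.
move=> U H1 H2 H3 H4.
apply: (@leq_trans (\sum_(w <- [:: w1; w2; w3; w4]) mult (MGraph es) u w)).
  rewrite !big_cons big_nil addn0.
  lia.
rewrite (big_uniq _ U) /= [X in _ <= X]big_mkcond /= big_mkcond /=.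
by apply: leq_sum => w _; case: ifP.
Qed.

Ltac neqt := solve [ exact isT | assumption | apply/eqP => E; subst; congruence ].

Lemma iso_part (es : seq ('I_8 * 'I_8)) lam :
  (forall v : 'I_8, @tile_at (MGraph es) lam v \in P0) ->
  let tau := fun v => index (@tile_at (MGraph es) lam v) (map seq_mset tl) in
  \sum_(v < 8) (tau v == 0) = 2 -> \sum_(v < 8) (tau v == 1) = 1 ->
  \sum_(v < 8) (tau v == 2) = 1 -> \sum_(v < 8) (tau v == 3) = 2 ->
  \sum_(v < 8) (tau v == 4) = 1 -> \sum_(v < 8) (tau v == 5) = 1 ->
  mg_iso (MGraph es) Q3.
Proof.
move=> HP tau N0 N1 N2 N3 N4 N5.
have Htau : forall v, tau v < 6 /\ @tile_at (MGraph es) lam v = seq_mset (tk (tau v)).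
  by move=> v; apply: P0_mem.
have Hmem : forall v y, (y \in @hl (MGraph es) lam v) = (y \in tk (tau v)).
  move=> v y; case: (Htau v) => _ E; rewrite tile_atE in E.
  move/eq_seq_msetP: E => Hp; exact: (perm_mem Hp y).
have Hsz : forall v, size (@hl (MGraph es) lam v) = 3.
  move=> v; case: (Htau v) => Hk E; rewrite tile_atE in E.
  move/eq_seq_msetP: E => Hp; rewrite (perm_size Hp).
  by move: Hk; case: (tau v) => [|[|[|[|[|[|k]]]]]].
have Hdeg : forall u, \sum_(w < 8) mult (MGraph es) u w <= 3.
  by move=> u; have := @deg_bound (MGraph es) lam u; rewrite Hsz.
have nb : forall u k y, tau u = k -> y \in tk k ->
    exists w, hat y \in tk (tau w) /\ 0 < mult (MGraph es) u w.
  move=> u k y Hu Hy; rewrite -Hu -Hmem in Hy.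
  have [w [Hw Hm]] := exists_nbr Hy; exists w; split => //; by rewrite -Hmem.
have TW : forall k y, k < 6 -> y \in tk k -> k \in [seq k <- iota 0 6 | y \in tk k].
  by move=> k y Hk Hy; rewrite mem_filter Hy mem_iota.
have nb1 : forall u k y k', tau u = k -> y \in tk k ->
    [seq k <- iota 0 6 | hat y \in tk k] = [:: k'] ->
    exists w, tau w = k' /\ 0 < mult (MGraph es) u w.
  move=> u k y k' Hu Hy E; have [w [Hw Hm]] := nb u k y Hu Hy; exists w; split => //.
  by have := TW _ _ (proj1 (Htau w)) Hw; rewrite E inE => /eqP.
have nb2 : forall u k y k1 k2, tau u = k -> y \in tk k ->
    [seq k <- iota 0 6 | hat y \in tk k] = [:: k1; k2] ->
    exists w, (tau w = k1 \/ tau w = k2) /\ 0 < mult (MGraph es) u w.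
  move=> u k y k1 k2 Hu Hy E; have [w [Hw Hm]] := nb u k y Hu Hy; exists w; split => //.
  by have := TW _ _ (proj1 (Htau w)) Hw; rewrite E !inE => /orP [/eqP -> | /eqP ->]; [left | right].
have [a1 [a2 [Na Ta1 Ta2 S0]]] := get2 N0.
have [c1 [Tc1 S1]] := get1 N1.
have [c2 [Tc2 S2]] := get1 N2.
have [b1 [b2 [Nb Tb1 Tb2 S3]]] := get2 N3.
have [c5 [Tc5 S4]] := get1 N4.
have [c6 [Tc6 S5]] := get1 N5.
have Fx : forall a, tau a = 0 -> 0 < mult (MGraph es) a c1.
  move=> a Ha; have [w [Tw Hm]] := nb1 a 0 (X 0) 1 Ha isT erefl; by rewrite -(S1 w Tw).
have Fy : forall a, tau a = 0 -> 0 < mult (MGraph es) a c2.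
  move=> a Ha; have [w [Tw Hm]] := nb1 a 0 (X 1) 2 Ha isT erefl; by rewrite -(S2 w Tw).
have Fz : forall a, tau a = 0 -> exists b, tau b = 3 /\ 0 < mult (MGraph es) a b.
  move=> a Ha; exact: (nb1 a 0 (X 2) 3 Ha isT erefl).
have Fp : forall b, tau b = 3 -> 0 < mult (MGraph es) b c5.
  move=> b Hb; have [w [Tw Hm]] := nb1 b 3 (X 3) 4 Hb isT erefl; by rewrite -(S4 w Tw).
have Fq : forall b, tau b = 3 -> 0 < mult (MGraph es) b c6.
  move=> b Hb; have [w [Tw Hm]] := nb1 b 3 (X 4) 5 Hb isT erefl; by rewrite -(S5 w Tw).
have Fu1 : exists g, (tau g = 4 \/ tau g = 5) /\ 0 < mult (MGraph es) c1 g.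
  exact: (nb2 c1 1 (X 5) 4 5 Tc1 isT erefl).
have Fu2 : exists g, (tau g = 4 \/ tau g = 5) /\ 0 < mult (MGraph es) c2 g.
  exact: (nb2 c2 2 (X 5) 4 5 Tc2 isT erefl).
have Fbg : forall b g, tau b = 3 -> (tau g = 4 \/ tau g = 5) -> 0 < mult (MGraph es) b g.
  move=> b g Hb [Hg | Hg]; [rewrite (S4 g Hg); exact: Fp | rewrite (S5 g Hg); exact: Fq].
have [be1 [Tbe1 H04]] := Fz a1 Ta1.
have [be2 [Tbe2 H37]] := Fz a2 Ta2.
have [ga1 [Tga1 H15]] := Fu1.
have [ga2 [Tga2 H26]] := Fu2.
have Nbe : be1 != be2.
  apply/eqP => E; subst be2.
  have U : uniq [:: a1; a2; c5; c6].
    rewrite /= !inE !negb_or -!andbA; repeat (apply/andP; split); neqt.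
  have G1 : 0 < mult (MGraph es) be1 a1 by rewrite mult_sym.
  have G2 : 0 < mult (MGraph es) be1 a2 by rewrite mult_sym.
  have := @deg4 es be1 _ _ _ _ U G1 G2 (Fp _ Tbe1) (Fq _ Tbe1).
  by move=> H; have := leq_trans H (Hdeg be1).
have Nga : ga1 != ga2.
  apply/eqP => E; subst ga2.
  have U : uniq [:: c1; c2; b1; b2].
    rewrite /= !inE !negb_or -!andbA; repeat (apply/andP; split); neqt.
  have G1 : 0 < mult (MGraph es) ga1 c1 by rewrite mult_sym.
  have G2 : 0 < mult (MGraph es) ga1 c2 by rewrite mult_sym.
  have G3 : 0 < mult (MGraph es) ga1 b1 by rewrite mult_sym; exact: Fbg.
  have G4 : 0 < mult (MGraph es) ga1 b2 by rewrite mult_sym; exact: Fbg.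
  have := @deg4 es ga1 _ _ _ _ U G1 G2 G3 G4.
  by move=> H; have := leq_trans H (Hdeg ga1).
have H01 := Fx a1 Ta1.
have H02 := Fy a1 Ta1.
have H13 : 0 < mult (MGraph es) c1 a2 by rewrite mult_sym; exact: Fx.
have H23 : 0 < mult (MGraph es) c2 a2 by rewrite mult_sym; exact: Fy.
have H45 := Fbg _ _ Tbe1 Tga1.
have H46 := Fbg _ _ Tbe1 Tga2.
have H57 : 0 < mult (MGraph es) ga1 be2 by rewrite mult_sym; exact: Fbg.
have H67 : 0 < mult (MGraph es) ga2 be2 by rewrite mult_sym; exact: Fbg.
have H10 : 0 < mult (MGraph es) c1 a1 by rewrite mult_sym.
have H20 : 0 < mult (MGraph es) c2 a1 by rewrite mult_sym.
have H40 : 0 < mult (MGraph es) be1 a1 by rewrite mult_sym.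
have H31 : 0 < mult (MGraph es) a2 c1 by rewrite mult_sym.
have H51 : 0 < mult (MGraph es) ga1 c1 by rewrite mult_sym.
have H32 : 0 < mult (MGraph es) a2 c2 by rewrite mult_sym.
have H62 : 0 < mult (MGraph es) ga2 c2 by rewrite mult_sym.
have H73 : 0 < mult (MGraph es) be2 a2 by rewrite mult_sym.
have H54 : 0 < mult (MGraph es) ga1 be1 by rewrite mult_sym.
have H64 : 0 < mult (MGraph es) ga2 be1 by rewrite mult_sym.
have H75 : 0 < mult (MGraph es) be2 ga1 by rewrite mult_sym.
have H76 : 0 < mult (MGraph es) be2 ga2 by rewrite mult_sym.
have UL : uniq [:: a1; c1; c2; a2; be1; ga1; ga2; be2].
  rewrite /= !inE !negb_or -!andbA.
  case: Tga1 => Tga1; case: Tga2 => Tga2; repeat (apply/andP; split); neqt.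
apply: (@assemble es [:: a1; c1; c2; a2; be1; ga1; ga2; be2] a1 UL erefl _ Hdeg).
rewrite Q3pairsE => pq; rewrite !inE.
  case/orP => [/eqP -> | ]; first exact: H01.
  case/orP => [/eqP -> | ]; first exact: H02.
  case/orP => [/eqP -> | ]; first exact: H04.
  case/orP => [/eqP -> | ]; first exact: H10.
  case/orP => [/eqP -> | ]; first exact: H13.
  case/orP => [/eqP -> | ]; first exact: H15.
  case/orP => [/eqP -> | ]; first exact: H20.
  case/orP => [/eqP -> | ]; first exact: H23.
  case/orP => [/eqP -> | ]; first exact: H26.
  case/orP => [/eqP -> | ]; first exact: H31.
  case/orP => [/eqP -> | ]; first exact: H32.
  case/orP => [/eqP -> | ]; first exact: H37.
  case/orP => [/eqP -> | ]; first exact: H40.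
  case/orP => [/eqP -> | ]; first exact: H45.
  case/orP => [/eqP -> | ]; first exact: H46.
  case/orP => [/eqP -> | ]; first exact: H51.
  case/orP => [/eqP -> | ]; first exact: H54.
  case/orP => [/eqP -> | ]; first exact: H57.
  case/orP => [/eqP -> | ]; first exact: H62.
  case/orP => [/eqP -> | ]; first exact: H64.
  case/orP => [/eqP -> | ]; first exact: H67.
  case/orP => [/eqP -> | ]; first exact: H73.
  case/orP => [/eqP -> | ]; first exact: H75.
  move=> /eqP ->; exact: H76.
Qed.

Local Open Scope fset_scope.

Theorem proposition3 : T3_eq Q3 6.
Proof.
split; last by move=> P HP; exact: lower HP.
exists P0; split; last exact: card_P0.
split.
- exact: pot_P0.
- exact: inO_Q3.
- move=> H [Hpos [lam HP]].
  have [Hn _] := counts HP.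
  move: Hn; set S := \sum_(v < nv H) _ => Hn.
  change (nv Q3) with 8; clearbody S; move: Hpos; rewrite Hn; case: S {Hn} => [|s] // _; rewrite mulnS; lia.
- case=> n es [Hpos [lam HP]] Hnv; simpl in Hnv; subst n.
  have [Hn [E0 E2 E3 E4 E5]] := counts HP.
  have E1 : \sum_(v < 8) (index (@tile_at (MGraph es) lam v) (map seq_mset tl) == 1) = 1.
    move: Hn; change (nv (MGraph es)) with 8.
    move: (\sum_(v < 8) _) => S; lia.
  apply: (iso_part HP).
  - by rewrite E0 E1.
  - exact: E1.
  - by rewrite E2 E1.
  - by rewrite E3 E1.
  - by rewrite E4 E1.
  - by rewrite E5 E1.
Qed.
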